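(* Let $(X,T)$ be a topological dynamical system and $d\in\mathbb{N}$. (1) For every $n\in\mathbb{N}$, ${\bf P}(X,T)={\bf P}(X,T^n)$. (2) If ${\bf P}(X,T)$ is closed, then ${\bf P}(N_d(X),\mathcal{G}_d(T))=\{((x_i)_{i=1}^d,(y_i)_{i=1}^d)\in N_d(X)\times N_d(X):(x_i,y_i)\in{\bf P}(X,T)\text{ for }i=1,\dots,d\}$.
   Context: For a system $(Z,G)$, ${\bf P}(Z,G)=\{(x,y):\inf_{g\in G}\rho(gx,gy)=0\}$ (for $(X,S)$, $G=\{S^k:k\in\mathbb{Z}\}$). $N_d(X)=\overline{\{(T^{p+q}x,\dots,T^{p+dq}x):x\in X,p,q\in\mathbb{Z}\}}$, $\mathcal{G}_d(T)=\langle T\times\cdots\times T,\ T\times T^2\times\cdots\times T^d\rangle$. *)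

(* Defs.v *)
From HB Require Import structures.
From mathcomp Require Import all_boot all_order all_algebra.
From mathcomp Require Import all_classical all_reals all_analysis.
Set Implicit Arguments. Unset Strict Implicit. Unset Printing Implicit Defensive.
Import Order.TTheory GRing.Theory Num.Theory.
Local Open Scope classical_set_scope.
Local Open Scope ring_scope.

Definition tds (R : realType) (X : metricType R) (T Tinv : X -> X) : Prop :=
  [/\ compact [set: X], continuous T, continuous Tinv,
      cancel T Tinv & cancel Tinv T].

Definition iterz (X : Type) (T Tinv : X -> X) (k : int) : X -> X :=
  match k with
  | Posz n => iter n T
  | Negz n => iter n.+1 Tinv
  end.

Definition proximal (R : realType) (X : metricType R) (T Tinv : X -> X)
    (x y : X) : Prop :=
  forall e : R, 0 < e -> exists k : int,
    mdist (iterz T Tinv k x) (iterz T Tinv k y) < e.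

(* Points of X^d are functions 'I_d -> X; coordinate i : 'I_d is the
   (i+1)-th coordinate of the paper.  X^d carries the max metric
   rho_d(z,w) = max_i rho(z i, w i). *)

(* N_d(X) = closure (for the max metric, i.e. the product topology) of
   {(T^{p+q}x, ..., T^{p+dq}x) : x in X, p,q in Z}. *)
Definition Nd (R : realType) (X : metricType R) (T Tinv : X -> X) (d : nat)
    (z : 'I_d -> X) : Prop :=
  forall e : R, 0 < e -> exists (x : X) (p q : int),
    forall i : 'I_d, mdist (z i) (iterz T Tinv (p + (i.+1)%:Z * q) x) < e.

(* The group G_d(T) = < T x ... x T , T x T^2 x ... x T^d > acting on X^d:
   the set of all finite words in the two generators and their inverses. *)
Definition diagT (X : Type) (d : nat) (T : X -> X) : ('I_d -> X) -> ('I_d -> X) :=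
  fun z i => T (z i).
Definition stepT (X : Type) (d : nat) (T : X -> X) : ('I_d -> X) -> ('I_d -> X) :=
  fun z i => iter i.+1 T (z i).

Inductive Gd (X : Type) (d : nat) (T Tinv : X -> X) :
    (('I_d -> X) -> ('I_d -> X)) -> Prop :=
  | Gd_id : Gd T Tinv id
  | Gd_sigma g : Gd T Tinv g -> Gd T Tinv (diagT T \o g)
  | Gd_sigmainv g : Gd T Tinv g -> Gd T Tinv (diagT Tinv \o g)
  | Gd_tau g : Gd T Tinv g -> Gd T Tinv (stepT T \o g)
  | Gd_tauinv g : Gd T Tinv g -> Gd T Tinv (stepT Tinv \o g).

Definition proximalGd (R : realType) (X : metricType R) (T Tinv : X -> X)
    (d : nat) (z w : 'I_d -> X) : Prop :=
  Nd T Tinv z /\ Nd T Tinv w /\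
  forall e : R, 0 < e -> exists g, Gd T Tinv g /\
    forall i : 'I_d, mdist (g z i) (g w i) < e.

(* Main.v *)
Require Import Defs.
From HB Require Import structures.
From mathcomp Require Import all_boot all_order all_algebra.
From mathcomp Require Import all_classical all_reals all_analysis.
From mathcomp Require Import ring lra.
Import Order.TTheory GRing.Theory Num.Theory.
Local Open Scope classical_set_scope.
Local Open Scope ring_scope.
Section Metric.
Context {R : realType} {X : metricType R}.

Lemma cont_metric (f : X -> X) (x : X) : continuous f ->
  forall e : R, 0 < e -> exists2 d : R, 0 < d &
    forall y, mdist x y < d -> mdist (f x) (f y) < e.
Proof.
move=> hf e e0.
have H : \forall t \near x, mdist (f x) (f t) < e.
  by apply: (metricType_numDomainType.cvgr_dist_lt (hf x) e0).
have [d /= d0 hd] := proj1 (metricType_numDomainType.nbhs_mdistP _ _) H.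
by exists d => // y hy; apply: hd.
Qed.

Lemma cluster_pt (B : R -> set (X * X)) : compact [set: X] ->
  (forall η, 0 < η -> B η !=set0) ->
  (forall η η', 0 < η -> η <= η' -> B η `<=` B η') ->
  exists a b : X, (forall η, 0 < η -> closure (B η) (a, b)) /\
    forall η δ δ', 0 < η -> 0 < δ -> 0 < δ' ->
    exists p, B η p /\ mdist a p.1 < δ /\ mdist b p.2 < δ'.
Proof.
move=> cX hne hmon.
pose F := filter_from (fun η : R => 0 < η) B.
have FF : Filter F.
  apply: filter_from_filter; first by exists 1.
  move=> i j i0 j0; case: (leP i j) => ij.
    by exists i => // p Bp; split => //; exact: (hmon i j i0 ij).
  by exists j => // p Bp; split => //; exact: (hmon j i j0 (ltW ij)).
have PF : ProperFilter F by apply: filter_from_proper.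
have := compact_setX cX cX PF.
case.
  by exists 1 => // p _.
move=> [a b] [_ cl]; exists a, b; split.
  move=> η η0 N NN; have FB : F (B η) by exists η.
  exact: cl _ _ FB NN.
move=> η δ δ' η0 δ0 δ0'.
have FB : F (B η) by exists η.
have NB : nbhs (a, b) [set p : X * X | mdist a p.1 < δ /\ mdist b p.2 < δ'].
  exists ([set y | mdist a y < δ], [set y | mdist b y < δ']).
    by split; apply: (proj2 (metricType_numDomainType.nbhs_mdistP _ _));
      [exists δ | exists δ'].
  by move=> [p1 p2] [/= h1 h2].
have [p [Bp [h1 h2]]] := cl _ _ FB NB.
by exists p.
Qed.

Lemma unif_cont (f : X -> X) : compact [set: X] -> continuous f ->
  forall e : R, 0 < e -> exists2 d : R, 0 < d &
    forall u v, mdist u v < d -> mdist (f u) (f v) < e.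
Proof.
move=> cX hf e e0.
apply: contrapT => Hne.
have H : forall d : R, 0 < d -> exists u v, mdist u v < d /\ e <= mdist (f u) (f v).
  move=> d d0; apply: contrapT => Hn; apply: Hne; exists d => // u v uv.
  rewrite ltNge; apply/negP => le; apply: Hn; by exists u, v.
pose B := fun η : R => [set p : X * X | mdist p.1 p.2 < η /\ e <= mdist (f p.1) (f p.2)].
have hB1 : forall η, 0 < η -> B η !=set0.
  by move=> η /H [u [v [h1 h2]]]; exists (u, v).
have hB2 : forall η η', 0 < η -> η <= η' -> B η `<=` B η'.
  by move=> η η' _ le p [h1 h2]; split => //; apply: lt_le_trans le.
have [a [b [_ hab]]] := @cluster_pt B cX hB1 hB2.
have eab : a = b.
  apply: mdist_positivity; apply/eqP; rewrite eq_le mdist_ge0 andbT.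
  rewrite leNgt; apply/negP => ab0.
  have d0 : 0 < mdist a b / 3 by rewrite divr_gt0.
  have [[p1 p2] [[/= B1 _] [/= h1 h2]]] := hab _ _ _ d0 d0 d0.
  have : mdist a b < mdist a b / 3 + mdist a b / 3 + mdist a b / 3.
    apply: (le_lt_trans (metric_triangle _ p1 _)).
    rewrite -addrA ltrD //.
    apply: (le_lt_trans (metric_triangle _ p2 _)).
    by rewrite ltrD // metric_sym.
  move=> hh; lra.
subst b.
have e20 : 0 < e / 2 by rewrite divr_gt0.
have [η η0 hη] := @cont_metric f a hf _ e20.
have [[p1 p2] [[/= B1 B2] [/= h1 h2]]] := hab _ _ _ ltr01 η0 η0.
have : mdist (f p1) (f p2) < e / 2 + e / 2.
  apply: (le_lt_trans (metric_triangle _ (f a) _)).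
  by rewrite ltrD // ?hη // metric_sym hη.
by rewrite -splitr ltNge B2.
Qed.
End Metric.
Section Iter.
Context {X : Type} (T Tinv : X -> X) (hK : cancel T Tinv) (hK' : cancel Tinv T).
Local Notation iz := (iterz T Tinv).

Lemma iterzS k x : iz (k + 1) x = T (iz k x).
Proof.
case: k => [n|[|n]] /=.
- by rewrite addn1.
- by rewrite hK'.
- by rewrite subn1 /= hK'.
Qed.

Lemma iterzN1 k x : iz (k - 1) x = Tinv (iz k x).
Proof. by rewrite -{2}(subrK 1 k) iterzS hK. Qed.

Lemma iterz_pos (n : nat) x : iz n x = iter n T x.
Proof. by []. Qed.

Lemma iterz_neg (n : nat) x : iz (- n%:Z) x = iter n Tinv x.
Proof. by case: n. Qed.

Lemma iterzD a b x : iz (a + b) x = iz a (iz b x).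
Proof.
case: a => [n|n].
  elim: n => [|n IH]; first by rewrite add0r.
  have -> : Posz n.+1 = (Posz n + 1)%R by rewrite -addn1 PoszD.
  by rewrite addrAC !iterzS IH.
elim: n => [|n IH].
  by rewrite /= -iterzN1 addrC.
have -> : Negz n.+1 = (Negz n - 1)%R by rewrite !NegzE -addn1 PoszD opprD.
by rewrite addrAC !iterzN1 IH.
Qed.
End Iter.
Lemma iterz_mul {X : Type} (T Tinv : X -> X) (n : nat) (m : int) x :
  iterz (iter n T) (iter n Tinv) m x = iterz T Tinv (m * n%:Z) x.
Proof.
case: m => [m|m].
  by rewrite -PoszM /= iterM.
rewrite NegzE mulNr -PoszM.
by rewrite (iterz_neg T Tinv) iterM.
Qed.

Lemma Gd_form {X : Type} (d : nat) (T Tinv : X -> X) (hK : cancel T Tinv)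
  (hK' : cancel Tinv T) g :
  Gd T Tinv g -> exists a b : int, forall (z : 'I_d -> X) i,
    g z i = iterz T Tinv (a + (i.+1)%:Z * b) (z i).
Proof.
elim => [|g' _ [a [b H]]|g' _ [a [b H]]|g' _ [a [b H]]|g' _ [a [b H]]].
- by exists 0, 0 => z i; rewrite mulr0 addr0.
- exists (a + 1), b => z i; rewrite /= /diagT H -iterzS //.
  by rewrite addrAC.
- exists (a - 1), b => z i; rewrite /= /diagT H -iterzN1 //.
  by rewrite addrAC.
- exists a, (b + 1) => z i; rewrite /= /stepT H -(iterz_pos T Tinv) -iterzD //.
  by congr (iterz _ _ _ _); ring.
- exists a, (b - 1) => z i; rewrite /= /stepT H -(iterz_neg T Tinv) -iterzD //.
  by congr (iterz _ _ _ _); ring.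
Qed.

Lemma Gd_diag {X : Type} (d : nat) (T Tinv : X -> X) (k : int) :
  exists g, Gd T Tinv g /\ forall (z : 'I_d -> X) i, g z i = iterz T Tinv k (z i).
Proof.
case: k => [n|n].
  elim: n => [|n [g [Hg H]]]; first by exists id; split => //; exact: Gd_id.
  exists (diagT T \o g); split; first exact: Gd_sigma.
  by move=> z i; rewrite /= /diagT H.
elim: n => [|n [g [Hg H]]].
  exists (diagT Tinv \o id); split; first by apply: Gd_sigmainv; exact: Gd_id.
  by [].
exists (diagT Tinv \o g); split; first exact: Gd_sigmainv.
by move=> z i; rewrite /= /diagT H.
Qed.

Lemma iter_cont {X : topologicalType} (f : X -> X) n :
  continuous f -> continuous (iter n f).
Proof.
move=> hf; elim: n => [|n IH] x /=; first exact: cvg_id.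
exact: (continuous_comp (IH x) (hf _)).
Qed.

Lemma iterz_cont {X : topologicalType} (T Tinv : X -> X) k :
  continuous T -> continuous Tinv -> continuous (iterz T Tinv k).
Proof. by move=> h1 h2; case: k => n; apply: iter_cont. Qed.

Lemma proximal_inv {R : realType} {X : metricType R} (T Tinv : X -> X)
  (hK : cancel T Tinv) (hK' : cancel Tinv T) k x y :
  proximal T Tinv x y -> proximal T Tinv (iterz T Tinv k x) (iterz T Tinv k y).
Proof.
move=> P e e0; have [m hm] := P e e0; exists (m - k).
by rewrite -!iterzD // subrK.
Qed.
Lemma simul {R : realType} {X : metricType R} (T Tinv : X -> X) :
  tds T Tinv ->
  closed [set p : X * X | proximal T Tinv p.1 p.2] ->
  forall s : seq (X * X), (forall p, p \in s -> proximal T Tinv p.1 p.2) ->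
  forall e : R, 0 < e -> exists k : int, forall p, p \in s ->
    mdist (iterz T Tinv k p.1) (iterz T Tinv k p.2) < e.
Proof.
case=> cX hT hTi hK hK' Pc.
elim => [|[x' y'] s IH] Hs.
  by move=> e e0; exists 0.
have IH' : forall e : R, 0 < e -> exists k : int, forall p, p \in s ->
    mdist (iterz T Tinv k p.1) (iterz T Tinv k p.2) < e.
  by apply: IH => p ps; apply: Hs; rewrite in_cons ps orbT.
have Px' : proximal T Tinv x' y' by apply: (Hs (x', y')); rewrite mem_head.
move=> e e0.
pose iz := iterz T Tinv.
pose B := fun η : R => [set p : X * X | exists k : int,
  (forall q, q \in s -> mdist (iz k q.1) (iz k q.2) < η) /\ p = (iz k x', iz k y')].
have hB1 : forall η, 0 < η -> B η !=set0.
  by move=> η /IH' [k hk]; exists (iz k x', iz k y'); exists k.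
have hB2 : forall η η', 0 < η -> η <= η' -> B η `<=` B η'.
  move=> η η' _ le p [k [hk ->]]; exists k; split => // q qs.
  exact: lt_le_trans (hk q qs) le.
have [b [c [hcl hab]]] := @cluster_pt R X B cX hB1 hB2.
have Pbc : proximal T Tinv b c.
  have : closure [set p : X * X | proximal T Tinv p.1 p.2] (b, c).
    apply: closureS (hcl _ ltr01).
    by move=> p [k [_ ->]]; apply: proximal_inv.
  by move/Pc.
have e3 : 0 < e / 3 by rewrite divr_gt0.
have [m hm] := Pbc _ e3.
have cm : continuous (iz m) by apply: iterz_cont.
have [δb δb0 hδb] := @cont_metric R X (iz m) b cm _ e3.
have [δc δc0 hδc] := @cont_metric R X (iz m) c cm _ e3.
have [δu δu0 hδu] := @unif_cont R X (iz m) cX cm _ e0.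
have [p [[k [hk ->]] [/= h1 h2]]] := hab _ _ _ δu0 δb0 δc0.
exists (m + k) => q; rewrite in_cons => /orP [/eqP -> /=|qs].
  rewrite !iterzD //.
  have := hδb _ h1; have := hδc _ h2.
  rewrite -/(iz m (iz k x')) -/(iz m (iz k y')).
  move: (iz m (iz k x')) (iz m (iz k y')) => u v hv hu.
  have t1 := metric_triangle u (iz m b) v.
  have t2 := metric_triangle (iz m b) (iz m c) v.
  have hu' : mdist u (iz m b) < e / 3 by rewrite metric_sym.
  have hm' : mdist (iz m b) (iz m c) < e / 3 := hm.
  lra.
rewrite !iterzD //; exact: hδu (hk q qs).
Qed.
Lemma unif_iter_fin {R : realType} {X : metricType R} (T : X -> X) :
  compact [set: X] -> continuous T ->
  forall e : R, 0 < e -> forall N : nat, exists2 δ : R, 0 < δ &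
    forall r : nat, (r <= N)%N -> forall u v, mdist u v < δ ->
      mdist (iter r T u) (iter r T v) < e.
Proof.
move=> cX hT e e0; elim => [|N [δ1 δ10 h1]].
  by exists e => // r; rewrite leqn0 => /eqP -> u v.
have [δ2 δ20 h2] := @unif_cont R X (iter N.+1 T) cX (@iter_cont X T N.+1 hT) _ e0.
exists (Num.min δ1 δ2); first by rewrite lt_min δ10 δ20.
move=> r; rewrite leq_eqVlt ltnS => /orP [/eqP -> | rN] u v; rewrite lt_min => /andP [u1 u2].
  exact: h2.
exact: h1.
Qed.

Theorem lemma4p1 (R : realType) (X : metricType R) (T Tinv : X -> X)
    (d : nat) :
  tds T Tinv ->
  (forall n : nat, (0 < n)%N ->
     forall x y : X,
       proximal T Tinv x y <-> proximal (iter n T) (iter n Tinv) x y) /\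
  (closed [set p : X * X | proximal T Tinv p.1 p.2] ->
     forall z w : 'I_d -> X,
       proximalGd T Tinv z w <->
       [/\ Nd T Tinv z, Nd T Tinv w &
           forall i : 'I_d, proximal T Tinv (z i) (w i)]).
Proof.
move=> htds; have htds' := htds; case: htds' => cX hT hTi hK hK'.
split.
  move=> n n0 x y; split.
    move=> Pxy e e0.
    have [δ δ0 hδ] := @unif_iter_fin R X T cX hT _ e0 n.
    have [k hk] := Pxy δ δ0.
    have nz : (n%:Z != 0) by rewrite eqz_nat -lt0n.
    have r0 : 0 <= (k %% n)%Z := modz_ge0 k nz.
    have rn : (k %% n)%Z < n by apply: ltz_pmod; rewrite ltz_nat.
    have [s hs] : exists s : nat, Posz s = n%:Z - (k %% n)%Z.
      by exists `|n%:Z - (k %% n)%Z|%N; rewrite abszE ger0_norm // subr_ge0 ltW.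
    have sn : (s <= n)%N by rewrite -lez_nat hs; lra.
    exists (divz k n + 1); rewrite !iterz_mul.
    have -> : ((divz k n + 1) * n%:Z = Posz s + k)%R.
      rewrite hs; move: (intdiv.divz_eq k n); move: (divz k n) (modz k n) => q r ->; ring.
    rewrite !iterzD //; exact: hδ.
  move=> P e e0; have [m hm] := P e e0; exists (m * n%:Z).
  by rewrite -!iterz_mul.
move=> Pc z w; split.
  move=> [Nz [Nw H]]; split => // i e e0.
  have [g [Hg Hge]] := H e e0.
  have [a [b Hab]] := @Gd_form X d T Tinv hK hK' g Hg.
  exists (a + (i.+1)%:Z * b); rewrite -!Hab; exact: Hge i.
move=> [Nz Nw H]; split => //; split => // e e0.
have hS : forall p, p \in [seq (z i, w i) | i <- enum 'I_d] ->
    proximal T Tinv p.1 p.2.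
  by move=> p /mapP [i _ ->]; exact: H.
have [k hk] := @simul R X T Tinv htds Pc _ hS e e0.
have [g [Hg Hge]] := Gd_diag d T Tinv k.
exists g; split => // i; rewrite !Hge.
by apply: (hk (z i, w i)); apply: map_f; rewrite mem_enum.
Qed.
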